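(* Let $\mathcal{R}=(X,\Phi,\check X,\check\Phi)$ be a semisimple root datum, $\mathcal{T}=(T,\emptyset,\check T,\emptyset)$ a torus, $A$ a finite $\mathbb{Z}$-module, and $h_1:X\to A$, $h_2:T\to A$ surjective homomorphisms with $\Phi\subseteq\ker h_1$. Let $\mathcal{R}'=\mathcal{R}\oplus_{(A,h_1,h_2)}\mathcal{T}=(B,\Phi',\check B,\check\Phi')$ with projections $p_1:B\to X$, $p_2:B\to T$. Then: (a) $\ker(p_1)=\check\Phi'^\perp$, so $p_1$ induces an isomorphism of root data $\mathcal{R}'_{\mathrm{der}}\to\mathcal{R}$; (b) $\ker(p_2)=\Phi'^\top$, so $p_2$ induces an isomorphism of root data $\mathcal{R}'_{\mathrm{rad}}\to\mathcal{T}$; (c) $\ker(h_1\circ p_1)=\ker(h_2\circ p_2)=\Phi'^\top\oplus\check\Phi'^\perp$, so $h_1\circ p_1=h_2\circ p_2$ induces an isomorphism of abelian groups $B/(\Phi'^\top\oplus\check\Phi'^\perp)\to A$.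
   Context: Root data are reduced quadruples $(X,\Phi,\check X,\check\Phi)$ with perfect pairing; a torus is a root datum with no roots; semisimple means $\mathbb{Q}\Phi=\mathbb{Q}\otimes X$. For $S\subseteq X$: $S^\top=\{x\in X: nx\in\mathbb{Z}S$ for some $n>0\}$, $S^\perp=\{y\in\check X:\langle x,y\rangle=0\ \forall x\in S\}$; similarly for subsets of $\check X$. $\mathcal{R}_{\mathrm{rad}}=(X/\Phi^\top,\emptyset,\check\Phi^\perp,\emptyset)$ and $\mathcal{R}_{\mathrm{der}}=(X/\check\Phi^\perp,\Phi,\check\Phi^\top,\check\Phi)$. Induced datum for a submodule $B\supseteq\Phi$: $(B,\Phi,\mathrm{Hom}(B,\mathbb{Z}),\check\iota_B(\check\Phi))$, $\check\iota_B(y)=\langle-,y\rangle|_B$. Central product $\mathcal{R}_1\oplus_{(A,h_1,h_2)}\mathcal{R}_2$ (for surjections $h_i:X_i\to A$ killing roots): the datum induced from the direct sum $\mathcal{R}_1\oplus\mathcal{R}_2$ by $\{(x_1,x_2)\in X_1\oplus X_2:h_1(x_1)=h_2(x_2)\}$. *)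

(* Defs.v *)
From HB Require Import structures.
From mathcomp Require Import all_boot all_order all_algebra.
Set Implicit Arguments. Unset Strict Implicit. Unset Printing Implicit Defensive.
Import Order.TTheory GRing.Theory Num.Theory.
Local Open Scope ring_scope.

Definition span_int (V : zmodType) (s : seq V) (x : V) : Prop :=
  exists c : 'I_(size s) -> int, x = \sum_(i < size s) s`_i *~ c i.

(* X is a finitely generated free
   Z-module, Xv is its dual via the perfect pairing rd_pair, the roots Phi and
   coroots Phiv are finite sets given as duplicate-free sequences, and the
   bijection Phi -> Phiv, alpha |-> alpha^v, is given by position. *)
Record rootDatum := RootDatum {
  rd_X : zmodType;
  rd_Xv : zmodType;
  rd_pair : rd_X -> rd_Xv -> int;
  rd_roots : seq rd_X;
  rd_coroots : seq rd_Xv;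
  rd_pairDl : forall x1 x2 y, rd_pair (x1 + x2) y = rd_pair x1 y + rd_pair x2 y;
  rd_pairDr : forall x y1 y2, rd_pair x (y1 + y2) = rd_pair x y1 + rd_pair x y2;
  rd_free : exists n (e : 'I_n -> rd_X),
      (forall x, exists c : 'I_n -> int, x = \sum_(i < n) e i *~ c i) /\
      (forall c : 'I_n -> int, \sum_(i < n) e i *~ c i = 0 -> forall i, c i = 0);
  rd_perfect_l : forall phi : rd_Xv -> int, {morph phi : a b / a + b} ->
      exists! x, forall y, phi y = rd_pair x y;
  rd_perfect_r : forall phi : rd_X -> int, {morph phi : a b / a + b} ->
      exists! y, forall x, phi x = rd_pair x y;
  rd_size : size rd_coroots = size rd_roots;
  rd_uniq : uniq rd_roots;
  rd_uniq_co : uniq rd_coroots;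
  rd_two : forall i, (i < size rd_roots)%N ->
      rd_pair rd_roots`_i rd_coroots`_i = 2;
  rd_refl : forall i j, (i < size rd_roots)%N -> (j < size rd_roots)%N ->
      rd_roots`_j - rd_roots`_i *~ rd_pair rd_roots`_j rd_coroots`_i
        \in rd_roots;
  rd_corefl : forall i j, (i < size rd_roots)%N -> (j < size rd_roots)%N ->
      rd_coroots`_j - rd_coroots`_i *~ rd_pair rd_roots`_i rd_coroots`_j
        \in rd_coroots;
  rd_reduced : forall i j (m n : int), (i < size rd_roots)%N ->
      (j < size rd_roots)%N -> m != 0 ->
      rd_roots`_i *~ m = rd_roots`_j *~ n ->
      rd_roots`_j = rd_roots`_i \/ rd_roots`_j = - rd_roots`_i
}.

(* Semisimple: Q Phi = Q (x) X, i.e. every x has a positive multiple in Z Phi. *)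
Definition semisimple (R : rootDatum) : Prop :=
  forall x : rd_X R, exists n : nat, (0 < n)%N /\ span_int (rd_roots R) (x *+ n).

Definition is_torus (R : rootDatum) : Prop := rd_roots R = [::].

Definition topP (V : zmodType) (B : V -> Prop) (S : seq V) (x : V) : Prop :=
  B x /\ exists n : nat, (0 < n)%N /\ span_int S (x *+ n).

(* F^perp inside B, for F a finite family of functionals on B (elements of
   Hom(B, Z), represented by their values). *)
Definition perpP (V : zmodType) (B : V -> Prop) (F : seq (V -> int)) (x : V)
  : Prop :=
  B x /\ forall i, (i < size F)%N -> nth (fun _ => 0) F i x = 0.

Definition ds_pair (R1 R2 : rootDatum) (b : rd_X R1 * rd_X R2)
  (y : rd_Xv R1 * rd_Xv R2) : int :=
  rd_pair b.1 y.1 + rd_pair b.2 y.2.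

Definition ds_roots (R1 R2 : rootDatum) : seq (rd_X R1 * rd_X R2) :=
  [seq (a, 0) | a <- rd_roots R1] ++ [seq (0, b) | b <- rd_roots R2].

Definition ds_coroots (R1 R2 : rootDatum) : seq (rd_Xv R1 * rd_Xv R2) :=
  [seq (a, 0) | a <- rd_coroots R1] ++ [seq (0, b) | b <- rd_coroots R2].

(* Central product R1 (+)_(A,h1,h2) R2 = datum induced from R1 (+) R2 by
   B = {(x1,x2) | h1 x1 = h2 x2}: lattice B, roots Phi (the direct-sum roots),
   dual Hom(B,Z), coroots iota_B(y) = <-, y>|_B (functionals on B). *)
Definition cp_B (R1 R2 : rootDatum) (A : zmodType)
  (h1 : rd_X R1 -> A) (h2 : rd_X R2 -> A) (b : rd_X R1 * rd_X R2) : Prop :=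
  h1 b.1 = h2 b.2.

Definition cp_roots (R1 R2 : rootDatum) : seq (rd_X R1 * rd_X R2) :=
  ds_roots R1 R2.

Definition cp_coroots (R1 R2 : rootDatum) : seq (rd_X R1 * rd_X R2 -> int) :=
  [seq (fun b => ds_pair b y) | y <- ds_coroots R1 R2].

Definition induces_grp_iso (V A : zmodType) (B K : V -> Prop) (p : V -> A)
  : Prop :=
  [/\ forall a b, B a -> B b -> p (a + b) = p a + p b,
      forall x, exists b, B b /\ p b = x &
      forall b, B b -> (p b = 0 <-> K b)].

(* p induces an isomorphism of root data from (B/K, rootsV, (B/K)^v, corootsV)
   to R: a group isomorphism f : B/K -> X(R) with f(rootsV) = Phi(R) and
   f^v(Phiv(R)) = corootsV (f^v = transpose, y |-> <f(-), y>). *)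
Definition induces_rd_iso (V : zmodType) (B K : V -> Prop) (rootsV : seq V)
  (corootsV : seq (V -> int)) (R : rootDatum) (p : V -> rd_X R) : Prop :=
  [/\ induces_grp_iso B K p,
      forall i, (i < size rootsV)%N -> p rootsV`_i \in rd_roots R,
      forall a, a \in rd_roots R ->
        exists2 i, (i < size rootsV)%N & p rootsV`_i = a,
      forall i, (i < size corootsV)%N ->
        exists2 j, (j < size (rd_coroots R))%N &
          forall b, B b -> nth (fun _ => 0) corootsV i b
                           = rd_pair (p b) (rd_coroots R)`_j &
      forall j, (j < size (rd_coroots R))%N ->
        exists2 i, (i < size corootsV)%N &
          forall b, B b -> nth (fun _ => 0) corootsV i b
                           = rd_pair (p b) (rd_coroots R)`_j].

(* Main.v *)
Require Import Defs.
From HB Require Import structures.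
From mathcomp Require Import all_boot all_order all_algebra ring zify.
Import Order.TTheory GRing.Theory Num.Theory.
Set Implicit Arguments. Unset Strict Implicit.
Local Open Scope ring_scope.

Section Add.
Variables (U V : zmodType) (f : U -> V) (fD : {morph f : a b / a + b}).
Lemma am0 : f 0 = 0.
Proof. have h := fD 0 0; rewrite addr0 in h.
by apply: (addrI (f 0)); rewrite -h addr0. Qed.
Lemma amN a : f (- a) = - f a.
Proof. apply: (addrI (f a)); by rewrite -fD !subrr am0. Qed.
Lemma amMn a n : f (a *+ n) = f a *+ n.
Proof. elim: n => [|n IH]; first by rewrite !mulr0n am0.
by rewrite !mulrS fD IH. Qed.
Lemma amMz a c : f (a *~ c) = f a *~ c.
Proof. case: c => n; first by rewrite /intmul amMn.
by rewrite /intmul amN amMn. Qed.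
Lemma amsum I (r : seq I) (P : pred I) F :
  f (\sum_(i <- r | P i) F i) = \sum_(i <- r | P i) f (F i).
Proof. exact: (big_morph f fD am0). Qed.
End Add.

Lemma pair_zero_l (R : rootDatum) (x : rd_X R) :
  (forall v, rd_pair x v = 0) -> x = 0.
Proof.
move=> H.
have [x0 [_ U]] := rd_perfect_l (phi := fun _ : rd_Xv R => (0:int)) (fun a b => esym (addr0 0)).
rewrite -(U x (fun y => esym (H y))).
apply: U => y.
apply: esym; apply: (@am0 _ _ (fun z => rd_pair z y)) => a b; exact: rd_pairDl.
Qed.

Section RD.
Variable R : rootDatum.
Local Notation X := (rd_X R).
Local Notation Xv := (rd_Xv R).
Local Notation pr := (@rd_pair R).
Local Notation rts := (rd_roots R).
Local Notation crts := (rd_coroots R).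

Lemma prDl x1 x2 y : pr (x1 + x2) y = pr x1 y + pr x2 y. Proof. exact: rd_pairDl. Qed.
Lemma prDr x y1 y2 : pr x (y1 + y2) = pr x y1 + pr x y2. Proof. exact: rd_pairDr. Qed.
Lemma pr0l y : pr 0 y = 0. Proof. exact: (@am0 _ _ (fun x => pr x y) (fun a b => prDl a b y)). Qed.
Lemma pr0r x : pr x 0 = 0. Proof. exact: (@am0 _ _ (fun y => pr x y) (fun a b => prDr x a b)). Qed.
Lemma prNl x y : pr (- x) y = - pr x y. Proof. exact: (@amN _ _ (fun x => pr x y) (fun a b => prDl a b y)). Qed.
Lemma prMzl x c y : pr (x *~ c) y = pr x y * c.
Proof. by rewrite (@amMz _ _ (fun x => pr x y) (fun a b => prDl a b y)) mulrzz. Qed.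
Lemma prMzr x c y : pr x (y *~ c) = pr x y * c.
Proof. by rewrite (@amMz _ _ (fun y => pr x y) (fun a b => prDr x a b)) mulrzz. Qed.
Lemma prMnl x n y : pr (x *+ n) y = pr x y *+ n.
Proof. exact: (@amMn _ _ (fun x => pr x y) (fun a b => prDl a b y)). Qed.
Lemma prBl x1 x2 y : pr (x1 - x2) y = pr x1 y - pr x2 y.
Proof. by rewrite prDl prNl. Qed.

Definition Fd (w v : Xv) : int :=
  \sum_(i < size rts) pr rts`_i w * pr rts`_i v.

Lemma FdE w v : Fd w v = \sum_(b <- rts) pr b w * pr b v.
Proof. by rewrite (big_nth 0) big_mkord. Qed.

Lemma Fd_refl i : (i < size rts)%N -> forall v,
  2 * Fd crts`_i v = pr rts`_i v * Fd crts`_i crts`_i.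
Proof.
move=> hi v.
set a := rts`_i; set av := crts`_i.
pose s := fun b : X => b - a *~ pr b av.
have prs : forall b y, pr (s b) y = pr b y - pr a y * pr b av.
  by move=> b y; rewrite /s prBl prMzl.
have two : pr a av = 2 by exact: rd_two.
have sroot : forall b, b \in rts -> s b \in rts.
  move=> b /(nthP 0) [j hj <-]; exact: rd_refl.
have sinv : forall b, s (s b) = b.
  move=> b; rewrite {1}/s prs two /s -addrA -opprD -mulrzDr.
  have -> : pr b av + (pr b av - 2 * pr b av) = 0 by ring.
  by rewrite mulr0z subr0.
have hperm : perm_eq rts (map s rts).
  apply: uniq_perm; first exact: rd_uniq.
    rewrite (map_inj_uniq (can_inj sinv)); exact: rd_uniq.
  move=> x; apply/idP/idP.
    by move=> hx; rewrite -(sinv x); apply: map_f; apply: sroot.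
  by move/mapP=> [y hy ->]; apply: sroot.
have E : Fd av v = \sum_(b <- rts) (- (pr b av * pr b v) + pr a v * (pr b av * pr b av)).
  rewrite FdE (perm_big _ hperm) big_map; apply: eq_bigr => b _.
  rewrite !prs two; ring.
have m2 : forall z : int, 2 * z = z + z by move=> z; ring.
rewrite m2 {2}E !FdE -big_split mulr_sumr; apply: eq_bigr => b _ /=.
by rewrite addrA subrr add0r.
Qed.

End RD.

Section RD2.
Variable R : rootDatum.
Local Notation X := (rd_X R).
Local Notation Xv := (rd_Xv R).
Local Notation pr := (@rd_pair R).
Local Notation rts := (rd_roots R).
Local Notation crts := (rd_coroots R).
Local Notation Fd := (@Fd R).

Lemma FdD w1 w2 v : Fd (w1 + w2) v = Fd w1 v + Fd w2 v.
Proof. rewrite /Fd -big_split; apply: eq_bigr => i _ /=; rewrite prDr; ring. Qed.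
Lemma Fd0 v : Fd (0 : Xv) v = 0.
Proof. by rewrite /Fd big1 // => i _; rewrite pr0r mul0r. Qed.
Lemma FdMz w k v : Fd (w *~ k) v = Fd w v * k.
Proof. rewrite /Fd mulr_suml; apply: eq_bigr => i _ /=; rewrite prMzr; ring. Qed.

Definition Pgood (y : X) : Prop := exists M : int, M != 0 /\ exists w : Xv,
  (forall v, pr y v * M = Fd w v) /\
  (forall z : X, (forall j, (j < size crts)%N -> pr z crts`_j = 0) -> pr z w = 0).

Lemma Pgood_span y : span_int rts y -> Pgood y.
Proof.
move=> [c ->]; apply: big_ind.
- exists 1; split => //; exists 0; split.
    by move=> v; rewrite pr0l mul0r Fd0.
  by move=> z _; rewrite pr0r.
- move=> y1 y2 [M1 [M1n [w1 [h1 z1]]]] [M2 [M2n [w2 [h2 z2]]]].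
  exists (M1 * M2); split; first by rewrite mulf_eq0 negb_or M1n.
  exists (w1 *~ M2 + w2 *~ M1); split.
    move=> v; rewrite FdD !FdMz -h1 -h2 prDl; ring.
  by move=> z hz; rewrite prDr !prMzr z1 // z2 // !mul0r addr0.
- move=> [i hi] _ /=.
  have two : pr rts`_i crts`_i = 2 by exact: rd_two.
  exists (Fd crts`_i crts`_i); split.
    rewrite /Fd (bigD1 (Ordinal hi)) //= two.
    apply: lt0r_neq0; apply: (@lt_le_trans _ _ (2*2)) => //; rewrite lerDl.
    by apply: sumr_ge0 => j _; rewrite -expr2 sqr_ge0.
  exists (crts`_i *~ (2 * c (Ordinal hi))); split.
    move=> v; rewrite prMzl FdMz.
    have := Fd_refl hi v => e.
    transitivity ((pr rts`_i v * Fd crts`_i crts`_i) * c (Ordinal hi)); first ring.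
    rewrite -e; ring.
  by move=> z hz; rewrite prMzr hz ?mul0r // rd_size.
Qed.

Lemma tf (x : X) n : (0 < n)%N -> x *+ n = 0 -> x = 0.
Proof.
move=> hn hx; apply: pair_zero_l => v.
have : pr (x *+ n) v = 0 by rewrite hx pr0l.
rewrite prMnl => /eqP; rewrite mulrn_eq0 => /orP [/eqP hn0|/eqP //].
by rewrite hn0 in hn.
Qed.

Lemma ss_perp : semisimple R -> forall x : X,
  (forall j, (j < size crts)%N -> pr x crts`_j = 0) -> x = 0.
Proof.
move=> hR x hx.
have [n [hn hsp]] := hR x.
have [M [Mn [w [hw hz]]]] := Pgood_span hsp.
have hy : forall j, (j < size crts)%N -> pr (x *+ n) crts`_j = 0.
  by move=> j hj; rewrite prMnl hx // mul0rn.
have e0 := hz _ hy.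
have := hw w; rewrite e0 mul0r /Fd => /esym e1.
have e2 : forall i : 'I_(size rts), pr rts`_i w = 0.
  move=> i.
  have hp : forall j : 'I_(size rts), xpredT j -> 0 <= pr rts`_j w * pr rts`_j w.
    by move=> j _; rewrite -expr2 sqr_ge0.
  have := @psumr_eq0P _ _ xpredT (fun j : 'I_(size rts) => pr rts`_j w * pr rts`_j w) hp e1 i isT.
  by move=> /= /eqP; rewrite mulf_eq0 orbb => /eqP.
apply: (tf hn); apply: pair_zero_l => v.
have : pr (x *+ n) v * M == 0.
  by rewrite hw /Fd; apply/eqP; apply: big1 => i _; rewrite e2 mul0r.
by rewrite mulf_eq0 (negbTE Mn) orbF => /eqP.
Qed.
End RD2.

Lemma spanP (V : zmodType) (s : seq V) x : span_int s x <->
  exists c : nat -> int, x = \sum_(i < size s) s`_i *~ c i.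
Proof.
split.
  move=> [c ->]; exists (fun n => if insub n is Some i then c i else 0).
  by apply: eq_bigr => i _; rewrite valK.
by move=> [c ->]; exists (fun i => c (val i)).
Qed.

Lemma span_map (U V : zmodType) (f : U -> V) (fD : {morph f : a b / a + b})
  (s : seq U) x : span_int s x -> span_int (map f s) (f x).
Proof.
move=> /spanP [c ->]; apply/spanP; exists c.
rewrite (amsum fD) size_map; apply: eq_bigr => i _.
by rewrite (amMz fD) (nth_map 0).
Qed.

Unset Implicit Arguments.
Theorem mainTheorem7 (R T : rootDatum) (A : finZmodType)
  (h1 : rd_X R -> A) (h2 : rd_X T -> A)
  (hR : semisimple R) (hT : is_torus T)
  (h1add : {morph h1 : x y / x + y}) (h2add : {morph h2 : x y / x + y})
  (h1surj : forall a : A, exists x, h1 x = a)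
  (h2surj : forall a : A, exists t, h2 t = a)
  (h1Phi : forall a, a \in rd_roots R -> h1 a = 0) :
  let B := cp_B h1 h2 in
  let Phi' := cp_roots R T in
  let Phiv' := cp_coroots R T in
  let Ktop := topP B Phi' in
  let Kperp := perpP B Phiv' in
  (* (a) *)
  ((forall b, B b -> (b.1 = 0 <-> Kperp b)) /\
   @induces_rd_iso _ B Kperp Phi' Phiv' R fst) /\
  (* (b) *)
  ((forall b, B b -> (b.2 = 0 <-> Ktop b)) /\
   @induces_rd_iso _ B Ktop [::] [::] T snd) /\
  (* (c) *)
  (let Ksum := fun b => exists u v, Ktop u /\ Kperp v /\ b = u + v in
   (forall b, Ktop b -> Kperp b -> b = 0) /\
   (forall b, B b -> (h1 b.1 = 0 <-> Ksum b)) /\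
   (forall b, B b -> (h2 b.2 = 0 <-> Ksum b)) /\
   (forall b, B b -> h1 b.1 = h2 b.2) /\
   induces_grp_iso B Ksum (fun b => h1 b.1)).
Proof.
move=> B Phi' Phiv' Ktop Kperp.
have cT : rd_coroots T = [::] by apply/nilP; rewrite /nilp rd_size hT.
have ePhi : Phi' = [seq (a, 0 : rd_X T) | a <- rd_roots R].
  by rewrite /Phi' /cp_roots /ds_roots hT cats0.
have sPhiv : size Phiv' = size (rd_coroots R).
  by rewrite /Phiv' /cp_coroots size_map /ds_coroots cT cats0 size_map.
have nPhiv : forall i b, (i < size (rd_coroots R))%N ->
    nth (fun _ => 0) Phiv' i b = rd_pair b.1 (rd_coroots R)`_i.
  move=> i b hi.
  rewrite /Phiv' /cp_coroots /ds_coroots cT cats0 (nth_map (0, 0)) ?size_map //.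
  by rewrite (nth_map 0) // /ds_pair /= pr0r addr0.
have h10 : h1 0 = 0 := am0 h1add.
have h20 : h2 0 = 0 := am0 h2add.
have aeq : forall b, B b -> (b.1 = 0 <-> Kperp b).
  move=> b hb; split.
    move=> e; split => // i; rewrite sPhiv => hi; by rewrite nPhiv // e pr0l.
  move=> [_ hp]; apply: (ss_perp hR) => j hj; rewrite -nPhiv //.
  by apply: hp; rewrite sPhiv.
have fD : {morph (fun a : rd_X R => (a, 0 : rd_X T)) : a b / a + b}.
  move=> a b; have -> : (a, 0 : rd_X T) + (b, 0) = (a + b, 0 + 0) by [].
  by rewrite addr0.
have sndD : {morph (@snd (rd_X R) (rd_X T)) : a b / a + b} by [].
have beq : forall b, B b -> (b.2 = 0 <-> Ktop b).
  move=> b hb; split.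
    move=> e; split => //.
    have [n [hn hsp]] := hR b.1.
    exists n; split => //.
    have -> : b = (b.1, 0) by move: e; case: b {hb hsp} => ? ? /= ->.
    have e2 : ((b.1, 0) : rd_X R * rd_X T) *+ n = (b.1 *+ n, 0) := esym (amMn fD b.1 n).
    by rewrite e2 ePhi; apply: (span_map fD hsp).
  move=> [_ [n [hn hsp]]]; apply: (tf hn).
  move: hsp; rewrite ePhi => /spanP [c hc].
  have := congr1 snd hc; rewrite (amMn sndD) (amsum sndD) => ->.
  apply: big1 => i _; rewrite (amMz sndD).
  case: i => k hk /=; rewrite size_map in hk.
  rewrite (nth_map 0) //=; exact: (@mul0rz (rd_X T) _).
split.
  split; first exact: aeq.
  split.
  - split => //.
      by move=> x; have [t ht] := h2surj (h1 x); exists (x, t).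
  - move=> i; rewrite ePhi size_map => hi; rewrite (nth_map 0) //=; exact: mem_nth.
  - move=> a /(nthP 0) [i hi <-]; exists i; rewrite ePhi ?size_map // (nth_map 0) //.
  - move=> i hi; exists i; first by rewrite -sPhiv.
    by move=> b _; apply: nPhiv; rewrite -sPhiv.
  - move=> j hj; exists j; first by rewrite sPhiv.
    by move=> b _; apply: nPhiv.
split.
  split; first exact: beq.
  split.
  - split => //.
      by move=> t; have [x hx] := h1surj (h2 t); exists (x, t).
  - by [].
  - by rewrite hT.
  - by [].
  - by rewrite cT.
move=> Ksum.
have keq : forall b, B b -> (h1 b.1 = 0 <-> Ksum b).
  move=> b hb; split.
    move=> h; exists (b.1, 0), (0, b.2); split.
      by apply/beq => //; rewrite /B /cp_B /= h h20.
    split; first by apply/aeq => //; rewrite /B /cp_B /= h10 -hb h.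
    case: b {hb h} => x t /=.
    have -> : ((x, 0) : rd_X R * rd_X T) + (0, t) = (x + 0, 0 + t) by [].
    by rewrite addr0 add0r.
  move=> [u [v [hu [hv ->]]]].
  have u2 := (beq u hu.1).2 hu; have v1 := (aeq v hv.1).2 hv.
  have hu1 : h1 u.1 = h2 u.2 := hu.1.
  by rewrite /= h1add v1 h10 addr0 hu1 u2 h20.
split.
  move=> [x t] hk hp; have := (beq _ hk.1).2 hk; have := (aeq _ hp.1).2 hp.
  by move=> /= -> ->.
split; first exact: keq.
split; first by move=> b hb; rewrite -hb; exact: keq.
split; first by [].
split.
- by move=> a b _ _; exact: h1add.
- move=> a; have [x hx] := h1surj a; have [t ht] := h2surj a.
  by exists (x, t); split => //; rewrite /B /cp_B /= hx ht.
- exact: keq.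
Qed.
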